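(* Let $\mathcal{C}_1,\mathcal{C}_2$ be small categories. The functor $\mathrm{Corr}_{\mathrm{eq}}(\mathcal{C}_1,\mathcal{C}_2)\to\mathrm{Funct}(\mathcal{C}_1,\mathcal{C}_2)$, sending $\mathcal{C}_1\xleftarrow{F}\mathcal{C}_{12}\xrightarrow{G}\mathcal{C}_2$ to $G\circ F^{-1}$, is left adjoint to the functor $\mathrm{Graph}:\mathrm{Funct}(\mathcal{C}_1,\mathcal{C}_2)\to\mathrm{Corr}_{\mathrm{eq}}(\mathcal{C}_1,\mathcal{C}_2)$. The unit of the adjunction is given by the functor $\mathcal{C}_{12}\to\mathrm{Graph}_{GF^{-1}}$ that sends $c$ to $(F(c),G(c),\psi)$. Here $\psi:GF^{-1}F(c)\xrightarrow{\sim}G(c)$ comes from the isomorphism $F^{-1}F(c)\xrightarrow{\sim}c$.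
   Context: $\mathrm{Cats}'$ is the naive 1-category of small categories, whose morphisms are functors on the nose. $\mathrm{Corr}(\mathcal{C}_1,\mathcal{C}_2)$ is the category of diagrams $\mathcal{C}_1\xleftarrow{F}\mathcal{C}_{12}\xrightarrow{G}\mathcal{C}_2$ in $\mathrm{Cats}'$. Its morphisms are functors $H$ between the middle terms with $F'H=F$, $G'H=G$ on the nose. $\mathrm{Corr}_{\mathrm{eq}}(\mathcal{C}_1,\mathcal{C}_2)$ is the full subcategory of those with $F$ an equivalence of categories. $F^{-1}$ denotes a quasi-inverse of $F$, so $G\circ F^{-1}$ is defined up to unique isomorphism. For a functor $\Phi:\mathcal{C}_1\to\mathcal{C}_2$, $\mathrm{Graph}_\Phi$ is the category of triples $(c_1,c_2,\psi)$ with $c_i\in\mathcal{C}_i$ and $\psi:\Phi(c_1)\xrightarrow{\sim}c_2$. $\mathrm{Graph}(\Phi)$ is the correspondence $\mathcal{C}_1\leftarrow\mathrm{Graph}_\Phi\to\mathcal{C}_2$ given by the projections. It lies in $\mathrm{Corr}_{\mathrm{eq}}$. *)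

(* Defs.v *)
(* a small self-contained layer of 1-category theory.
   Equality of functors is Leibniz equality ("on the nose"); proof
   components are handled with proof irrelevance. *)
From Stdlib Require Import ProofIrrelevance.

Set Implicit Arguments.
Unset Strict Implicit.

Record Category := {
  Ob :> Type;
  Hom : Ob -> Ob -> Type;
  idm : forall a, Hom a a;
  comp : forall a b c, Hom b c -> Hom a b -> Hom a c;
  comp_id_l : forall a b (f : Hom a b), comp (idm b) f = f;
  comp_id_r : forall a b (f : Hom a b), comp f (idm a) = f;
  comp_assoc : forall a b c d (h : Hom c d) (g : Hom b c) (f : Hom a b),
      comp h (comp g f) = comp (comp h g) f
}.
Arguments Hom {C} a b : rename.
Arguments idm {C} a : rename.
Arguments comp {C a b c} g f : rename.

Definition is_iso (C : Category) (a b : C) (f : Hom a b) : Prop :=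
  exists g : Hom b a, comp g f = idm a /\ comp f g = idm b.

Record Functor (C D : Category) := {
  fobj :> C -> D;
  fmap : forall a b, Hom a b -> Hom (fobj a) (fobj b);
  fmap_id : forall a, fmap (idm a) = idm (fobj a);
  fmap_comp : forall a b c (g : Hom b c) (f : Hom a b),
      fmap (comp g f) = comp (fmap g) (fmap f)
}.
Arguments fmap {C D} F {a b} f : rename.

Definition Fid (C : Category) : Functor C C :=
  {| fobj := fun a => a; fmap := fun a b f => f;
     fmap_id := fun a => eq_refl; fmap_comp := fun a b c g f => eq_refl |}.

Program Definition Fcomp (C D E : Category) (G : Functor D E) (F : Functor C D)
  : Functor C E :=
  {| fobj := fun a => G (F a); fmap := fun a b f => fmap G (fmap F f) |}.
Next Obligation. intros; simpl; rewrite !fmap_id; reflexivity. Qed.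
Next Obligation. intros; simpl; rewrite !fmap_comp; reflexivity. Qed.

Record NatIso (C D : Category) (F G : Functor C D) := {
  iso_fwd : forall a, Hom (F a) (G a);
  iso_bwd : forall a, Hom (G a) (F a);
  iso_nat : forall a b (f : Hom a b),
      comp (fmap G f) (iso_fwd a) = comp (iso_fwd b) (fmap F f);
  iso_bwd_fwd : forall a, comp (iso_bwd a) (iso_fwd a) = idm (F a);
  iso_fwd_bwd : forall a, comp (iso_fwd a) (iso_bwd a) = idm (G a)
}.
Arguments iso_fwd {C D F G} n a : rename.
Arguments iso_bwd {C D F G} n a : rename.

Lemma iso_bwd_nat (C D : Category) (F G : Functor C D) (n : NatIso F G)
  a b (f : Hom a b) :
  comp (fmap F f) (iso_bwd n a) = comp (iso_bwd n b) (fmap G f).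
Proof.
  rewrite <- (comp_id_l (comp (fmap F f) (iso_bwd n a))).
  rewrite <- (iso_bwd_fwd n b), <- comp_assoc, (comp_assoc (iso_fwd n b)).
  rewrite <- iso_nat, <- !comp_assoc, iso_fwd_bwd, comp_id_r. reflexivity.
Qed.

Record QuasiInverse (C D : Category) (F : Functor C D) := {
  qinv : Functor D C;
  qunit : NatIso (Fcomp qinv F) (Fid C);
  qcounit : NatIso (Fcomp F qinv) (Fid D)
}.

Definition IsEquivalence (C D : Category) (F : Functor C D) : Prop :=
  inhabited (QuasiInverse F).

Section Graph.
Context (C1 C2 : Category) (Phi : Functor C1 C2).

Record GraphOb := {
  g1 : C1;
  g2 : C2;
  gpsi : Hom (Phi g1) g2;
  gpsi_iso : is_iso gpsi
}.

Record GraphHom (x y : GraphOb) := {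
  h1 : Hom (g1 x) (g1 y);
  h2 : Hom (g2 x) (g2 y);
  h_comm : comp (gpsi y) (fmap Phi h1) = comp h2 (gpsi x)
}.

Lemma GraphHom_eq (x y : GraphOb) (f g : GraphHom x y) :
  h1 f = h1 g -> h2 f = h2 g -> f = g.
Proof.
  destruct f as [f1 f2 fc], g as [g1' g2' gc]; simpl; intros -> ->.
  f_equal; apply proof_irrelevance.
Qed.

Program Definition Graph_id (x : GraphOb) : GraphHom x x :=
  {| h1 := idm (g1 x); h2 := idm (g2 x) |}.
Next Obligation. intros; simpl. rewrite fmap_id, comp_id_l, comp_id_r; reflexivity. Qed.

Program Definition Graph_comp (x y z : GraphOb) (g : GraphHom y z)
  (f : GraphHom x y) : GraphHom x z :=
  {| h1 := comp (h1 g) (h1 f); h2 := comp (h2 g) (h2 f) |}.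
Next Obligation. intros; simpl.
  rewrite fmap_comp, comp_assoc, h_comm, <- comp_assoc, h_comm, comp_assoc.
  reflexivity.
Qed.

Program Definition GraphCat : Category :=
  {| Ob := GraphOb; Hom := GraphHom; idm := Graph_id; comp := Graph_comp |}.
Next Obligation. intros; simpl; apply GraphHom_eq; simpl; apply comp_id_l. Qed.
Next Obligation. intros; simpl; apply GraphHom_eq; simpl; apply comp_id_r. Qed.
Next Obligation. intros; simpl; apply GraphHom_eq; simpl; apply comp_assoc. Qed.

Program Definition gproj1 : Functor GraphCat C1 :=
  {| fobj := fun x => g1 x; fmap := fun x y f => h1 f |}.
Next Obligation. reflexivity. Qed.
Next Obligation. reflexivity. Qed.
Program Definition gproj2 : Functor GraphCat C2 :=
  {| fobj := fun x => g2 x; fmap := fun x y f => h2 f |}.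
Next Obligation. reflexivity. Qed.
Next Obligation. reflexivity. Qed.

End Graph.

(** The functor Graph on morphisms: a natural isomorphism alpha : Phi ~= Phi'
    induces Graph_Phi -> Graph_Phi', (c1, c2, psi) |-> (c1, c2, psi o alpha^{-1}),
    which commutes on the nose with the projections. *)
Lemma is_iso_comp (C : Category) (a b c : C) (g : Hom b c) (f : Hom a b) :
  is_iso g -> is_iso f -> is_iso (comp g f).
Proof.
  intros [g' [Hg1 Hg2]] [f' [Hf1 Hf2]]. exists (comp f' g'). split.
  - rewrite comp_assoc, <- (comp_assoc f'), Hg1, comp_id_r. exact Hf1.
  - rewrite comp_assoc, <- (comp_assoc g), Hf2, comp_id_r. exact Hg2.
Qed.

Lemma is_iso_bwd (C D : Category) (F G : Functor C D) (n : NatIso F G) a :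
  is_iso (iso_bwd n a).
Proof. exists (iso_fwd n a). split; [apply iso_fwd_bwd | apply iso_bwd_fwd]. Qed.

Lemma is_iso_fwd (C D : Category) (F G : Functor C D) (n : NatIso F G) a :
  is_iso (iso_fwd n a).
Proof. exists (iso_bwd n a). split; [apply iso_bwd_fwd | apply iso_fwd_bwd]. Qed.

Lemma is_iso_fmap (C D : Category) (F : Functor C D) a b (f : Hom a b) :
  is_iso f -> is_iso (fmap F f).
Proof.
  intros [g [H1 H2]]. exists (fmap F g).
  now rewrite <- !fmap_comp, H1, H2, !fmap_id.
Qed.

Section GraphMap.
Context (C1 C2 : Category) (Phi Phi' : Functor C1 C2) (alpha : NatIso Phi Phi').

Definition GraphMap_ob (x : GraphOb Phi) : GraphOb Phi' :=
  {| g1 := g1 x; g2 := g2 x; gpsi := comp (gpsi x) (iso_bwd alpha (g1 x));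
     gpsi_iso := is_iso_comp (gpsi_iso x) (is_iso_bwd alpha (g1 x)) |}.

Program Definition GraphMap_hom (x y : GraphOb Phi) (f : GraphHom x y)
  : GraphHom (GraphMap_ob x) (GraphMap_ob y) :=
  {| h1 := h1 f; h2 := h2 f |}.
Next Obligation. intros; simpl.
  rewrite <- comp_assoc, <- iso_bwd_nat, comp_assoc, h_comm, comp_assoc.
  reflexivity.
Qed.

Program Definition GraphMap : Functor (GraphCat Phi) (GraphCat Phi') :=
  {| fobj := GraphMap_ob; fmap := GraphMap_hom |}.
Next Obligation. intros; simpl; apply GraphHom_eq; reflexivity. Qed.
Next Obligation. intros; simpl; apply GraphHom_eq; reflexivity. Qed.
End GraphMap.

Definition corr_to_funct (C1 C2 C12 : Category) (F : Functor C12 C1)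
  (G : Functor C12 C2) (q : QuasiInverse F) : Functor C1 C2 :=
  Fcomp G (qinv q).

Section Unit.
Context (C1 C2 C12 : Category) (F : Functor C12 C1) (G : Functor C12 C2)
  (q : QuasiInverse F).

Definition unit_ob (c : C12) : GraphOb (corr_to_funct G q) :=
  @Build_GraphOb _ _ (corr_to_funct G q) (F c) (G c)
     (fmap G (iso_fwd (qunit q) c))
     (is_iso_fmap G (is_iso_fwd (qunit q) c)).

Program Definition unit_hom (c d : C12) (f : Hom c d)
  : GraphHom (unit_ob c) (unit_ob d) :=
  {| h1 := fmap F f; h2 := fmap G f |}.
Next Obligation. intros; simpl.
  rewrite <- !fmap_comp. f_equal.
  symmetry. exact (iso_nat (qunit q) f).
Qed.

Program Definition unit_functor : Functor C12 (GraphCat (corr_to_funct G q)) :=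
  {| fobj := unit_ob; fmap := unit_hom |}.
Next Obligation. intros; simpl; apply GraphHom_eq; simpl; apply fmap_id. Qed.
Next Obligation. intros; simpl; apply GraphHom_eq; simpl; apply fmap_comp. Qed.
End Unit.

(* Main.v *)
Require Import Defs.
From Stdlib Require Import ProofIrrelevance IndefiniteDescription FunctionalExtensionality.
Set Implicit Arguments.
Unset Strict Implicit.

Definition thom {C : Category} {x x' y y' : C} (e1 : x = x') (e2 : y = y')
  (f : Hom x y) : Hom x' y' :=
  match e1 in _ = x0 return Hom x0 y' with
  | eq_refl => match e2 in _ = y0 return Hom x y0 with eq_refl => f end end.

Lemma functor_ext (C D : Category) (F G : Functor C D)
  (Ho : forall x, F x = G x)
  (Hm : forall a b (f : Hom a b), thom (Ho a) (Ho b) (fmap F f) = fmap G f) :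
  F = G.
Proof.
  destruct F as [oF mF iF cF], G as [oG mG iG cG]; simpl in *.
  assert (e : oF = oG) by (apply functional_extensionality; exact Ho).
  subst oG.
  assert (Hm' : mF = mG).
  { apply functional_extensionality_dep; intro a.
    apply functional_extensionality_dep; intro b.
    apply functional_extensionality; intro f.
    rewrite <- Hm.
    rewrite (proof_irrelevance _ (Ho a) eq_refl), (proof_irrelevance _ (Ho b) eq_refl).
    reflexivity. }
  subst mG.
  rewrite (proof_irrelevance _ iF iG), (proof_irrelevance _ cF cG). reflexivity.
Qed.

Lemma rw_r (C : Category) (x y y' z : C) (a : Hom y z) (b : Hom x y)
  (c : Hom y' z) (d : Hom x y') :
  comp a b = comp c d -> forall w (h : Hom w x), comp a (comp b h) = comp c (comp d h).
Proof. intros E w h. rewrite !comp_assoc, E. reflexivity. Qed.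

Lemma rw_r1 (C : Category) (x y : C) (a : Hom y x) (b : Hom x y) :
  comp a b = idm x -> forall w (h : Hom w x), comp a (comp b h) = h.
Proof. intros E w h. rewrite comp_assoc, E, comp_id_l. reflexivity. Qed.

Definition inv_of {C : Category} {a b : C} {f : Hom a b} (Hf : is_iso f) : Hom b a :=
  proj1_sig (constructive_indefinite_description _ Hf).

Lemma inv_of_l {C : Category} {a b : C} (f : Hom a b) (Hf : is_iso f) :
  comp (inv_of Hf) f = idm a.
Proof. unfold inv_of. destruct (constructive_indefinite_description _ Hf) as [g [H1 H2]]. exact H1. Qed.
Lemma inv_of_r {C : Category} {a b : C} (f : Hom a b) (Hf : is_iso f) :
  comp f (inv_of Hf) = idm b.
Proof. unfold inv_of. destruct (constructive_indefinite_description _ Hf) as [g [H1 H2]]. exact H2. Qed.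

Lemma NatIso_eq (C D : Category) (F G : Functor C D) (n m : NatIso F G) :
  (forall a, iso_fwd n a = iso_fwd m a) -> (forall a, iso_bwd n a = iso_bwd m a) -> n = m.
Proof.
  destruct n as [f b n1 n2 n3], m as [f' b' m1 m2 m3]; simpl; intros Hf Hb.
  assert (f = f') by (apply functional_extensionality_dep; exact Hf). subst f'.
  assert (b = b') by (apply functional_extensionality_dep; exact Hb). subst b'.
  rewrite (proof_irrelevance _ n1 m1), (proof_irrelevance _ n2 m2), (proof_irrelevance _ n3 m3).
  reflexivity.
Qed.

Lemma GraphOb_eta (C1 C2 : Category) (Phi : Functor C1 C2) (y : GraphOb Phi)
  (p : Hom (Phi (g1 y)) (g2 y)) (i : is_iso p) :
  p = gpsi y -> @Build_GraphOb _ _ Phi (g1 y) (g2 y) p i = y.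
Proof.
  destruct y as [a b p' i']; simpl; intros ->.
  rewrite (proof_irrelevance _ i i'). reflexivity.
Qed.

Lemma thom_h1 (C1 C2 : Category) (Phi : Functor C1 C2) (x x' y y' : GraphCat Phi)
  (e1 : x = x') (e2 : y = y') (f : Hom x y) :
  h1 (thom e1 e2 f) = thom (f_equal (@g1 _ _ Phi) e1) (f_equal (@g1 _ _ Phi) e2) (h1 f).
Proof. destruct e1, e2. reflexivity. Qed.
Lemma thom_h2 (C1 C2 : Category) (Phi : Functor C1 C2) (x x' y y' : GraphCat Phi)
  (e1 : x = x') (e2 : y = y') (f : Hom x y) :
  h2 (thom e1 e2 f) = thom (f_equal (@g2 _ _ Phi) e1) (f_equal (@g2 _ _ Phi) e2) (h2 f).
Proof. destruct e1, e2. reflexivity. Qed.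

Lemma rw_r2 (C : Category) (x y z : C) (a : Hom y z) (b : Hom x y) (c : Hom x z) :
  comp a b = c -> forall w (h : Hom w x), comp a (comp b h) = comp c h.
Proof. intros E w h. rewrite comp_assoc, E. reflexivity. Qed.

Lemma fmap_comp_r (C D : Category) (F : Functor C D) (a b c : C) (g : Hom b c) (f : Hom a b)
  w (h : Hom w (F a)) : comp (fmap F g) (comp (fmap F f) h) = comp (fmap F (comp g f)) h.
Proof. apply rw_r2. symmetry; apply fmap_comp. Qed.

Set Implicit Arguments.

Section P3.
Context (C1 C2 C12 : Category) (Phi : Functor C1 C2) (H : Functor C12 (GraphCat Phi))
  (q : QuasiInverse (Fcomp (gproj1 Phi) H)).
Local Notation F := (Fcomp (gproj1 Phi) H).
Local Notation G := (Fcomp (gproj2 Phi) H).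
Local Notation K := (qinv q).

Definition eta (c : C12) : Hom (K (F c)) c := iso_fwd (qunit q) c.
Definition etai (c : C12) : Hom c (K (F c)) := iso_bwd (qunit q) c.
Definition eps (d : C1) : Hom (F (K d)) d := iso_fwd (qcounit q) d.
Definition epsi (d : C1) : Hom d (F (K d)) := iso_bwd (qcounit q) d.
Definition psi (c : C12) : Hom (Phi (F c)) (G c) := gpsi (H c).
Definition psii (c : C12) : Hom (G c) (Phi (F c)) := inv_of (gpsi_iso (H c)).

Lemma eta_nat c d (f : Hom c d) : comp f (eta c) = comp (eta d) (fmap K (fmap F f)).
Proof. exact (iso_nat (qunit q) f). Qed.
Lemma etai_nat c d (f : Hom c d) : comp (fmap K (fmap F f)) (etai c) = comp (etai d) f.
Proof. exact (iso_bwd_nat (qunit q) f). Qed.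
Lemma eps_nat c d (f : Hom c d) : comp f (eps c) = comp (eps d) (fmap F (fmap K f)).
Proof. exact (iso_nat (qcounit q) f). Qed.
Lemma epsi_nat c d (f : Hom c d) : comp (fmap F (fmap K f)) (epsi c) = comp (epsi d) f.
Proof. exact (iso_bwd_nat (qcounit q) f). Qed.
Lemma eta_etai c : comp (eta c) (etai c) = idm c. Proof. exact (iso_fwd_bwd (qunit q) c). Qed.
Lemma etai_eta c : comp (etai c) (eta c) = idm _. Proof. exact (iso_bwd_fwd (qunit q) c). Qed.
Lemma eps_epsi c : comp (eps c) (epsi c) = idm c. Proof. exact (iso_fwd_bwd (qcounit q) c). Qed.
Lemma epsi_eps c : comp (epsi c) (eps c) = idm _. Proof. exact (iso_bwd_fwd (qcounit q) c). Qed.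
Lemma psi_psii c : comp (psi c) (psii c) = idm _. Proof. apply inv_of_r. Qed.
Lemma psii_psi c : comp (psii c) (psi c) = idm _. Proof. apply inv_of_l. Qed.
Lemma psi_nat c d (f : Hom c d) :
  comp (psi d) (fmap Phi (fmap F f)) = comp (fmap G f) (psi c).
Proof. exact (h_comm (fmap H f)). Qed.
Lemma psii_nat c d (f : Hom c d) :
  comp (fmap Phi (fmap F f)) (psii c) = comp (psii d) (fmap G f).
Proof.
  rewrite <- (comp_id_l (comp (fmap Phi (fmap F f)) (psii c))).
  rewrite <- (psii_psi d), <- !comp_assoc, (rw_r (psi_nat f)), psi_psii, comp_id_r.
  reflexivity.
Qed.

Definition eps' d : Hom (F (K d)) d :=
  comp (eps d) (comp (fmap F (eta (K d))) (epsi (F (K d)))).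
Definition eps'i d : Hom d (F (K d)) :=
  comp (eps (F (K d))) (comp (fmap F (etai (K d))) (epsi d)).

Lemma eps'_eps'i d : comp (eps' d) (eps'i d) = idm d.
Proof.
  unfold eps', eps'i. rewrite <- !comp_assoc.
  rewrite (rw_r1 (epsi_eps _)), fmap_comp_r, eta_etai, fmap_id, comp_id_l.
  apply eps_epsi.
Qed.
Lemma eps'i_eps' d : comp (eps'i d) (eps' d) = idm _.
Proof.
  unfold eps', eps'i. rewrite <- !comp_assoc.
  rewrite (rw_r1 (epsi_eps _)), fmap_comp_r, etai_eta, fmap_id, comp_id_l.
  apply eps_epsi.
Qed.

Lemma eta_KF c : eta (K (F c)) = fmap K (fmap F (eta c)).
Proof.
  pose proof (eta_nat (eta c)) as E.
  rewrite <- (comp_id_l (eta (K (F c)))), <- (etai_eta c), <- comp_assoc, E.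
  rewrite comp_assoc, etai_eta, comp_id_l. reflexivity.
Qed.

Lemma eps'_F c : eps' (F c) = fmap F (eta c).
Proof.
  unfold eps'. rewrite eta_KF, comp_assoc, <- eps_nat, <- comp_assoc, eps_epsi, comp_id_r.
  reflexivity.
Qed.

Lemma eps'_nat d d' (g : Hom d d') : comp g (eps' d) = comp (eps' d') (fmap F (fmap K g)).
Proof.
  unfold eps'. rewrite comp_assoc, eps_nat, <- !comp_assoc.
  rewrite fmap_comp_r, eta_nat, fmap_comp, <- !comp_assoc, epsi_nat. reflexivity.
Qed.

Definition alpha_f d : Hom (corr_to_funct G q d) (Phi d) := comp (fmap Phi (eps' d)) (psii (K d)).
Definition alpha_b d : Hom (Phi d) (corr_to_funct G q d) := comp (psi (K d)) (fmap Phi (eps'i d)).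

Lemma alpha_nat a b (f : Hom a b) :
  comp (fmap (corr_to_funct G q) f) (alpha_b a) = comp (alpha_b b) (fmap Phi f) -> True.
Proof. auto. Qed.

Lemma alpha_nat_f a b (f : Hom a b) :
  comp (fmap Phi f) (alpha_f a) = comp (alpha_f b) (fmap (corr_to_funct G q) f).
Proof.
  unfold alpha_f. rewrite !comp_assoc, <- fmap_comp, eps'_nat, fmap_comp.
  rewrite <- !comp_assoc. f_equal. apply psii_nat.
Qed.

Lemma alpha_bf a : comp (alpha_b a) (alpha_f a) = idm _.
Proof.
  unfold alpha_f, alpha_b. rewrite <- !comp_assoc, fmap_comp_r, eps'i_eps', fmap_id, comp_id_l.
  apply psi_psii.
Qed.
Lemma alpha_fb a : comp (alpha_f a) (alpha_b a) = idm _.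
Proof.
  unfold alpha_f, alpha_b. rewrite <- !comp_assoc, (rw_r1 (psii_psi _)), <- fmap_comp, eps'_eps'i.
  apply fmap_id.
Qed.

Definition alpha : NatIso (corr_to_funct G q) Phi :=
  {| iso_fwd := alpha_f; iso_bwd := alpha_b; iso_nat := alpha_nat_f;
     iso_bwd_fwd := alpha_bf; iso_fwd_bwd := alpha_fb |}.

Lemma alpha_cond c : comp (fmap G (eta c)) (alpha_b (F c)) = psi c.
Proof.
  unfold alpha_b. rewrite comp_assoc, <- psi_nat, <- comp_assoc, <- fmap_comp, <- eps'_F,
    eps'_eps'i, fmap_id, comp_id_r. reflexivity.
Qed.

Lemma bwd_decomp (n : NatIso (corr_to_funct G q) Phi) d :
  iso_bwd n d = comp (comp (fmap (corr_to_funct G q) (eps d)) (iso_bwd n (F (K d)))) (fmap Phi (epsi d)).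
Proof.
  rewrite iso_bwd_nat, <- comp_assoc, <- fmap_comp, eps_epsi, fmap_id, comp_id_r. reflexivity.
Qed.

Lemma Ho c : fobj (Fcomp (GraphMap alpha) (unit_functor G q)) c = H c.
Proof. exact (@GraphOb_eta _ _ _ (H c) _ _ (alpha_cond c)). Qed.

Lemma part3 : exists! beta : NatIso (corr_to_funct G q) Phi,
    Fcomp (GraphMap beta) (unit_functor G q) = H.
Proof.
  exists alpha. split.
  - apply (@functor_ext _ _ _ _ Ho). intros a b f.
    apply GraphHom_eq.
    + rewrite thom_h1.
      rewrite (proof_irrelevance _ (f_equal (@g1 _ _ Phi) (Ho a)) (eq_refl (g1 (H a)))), (proof_irrelevance _ (f_equal (@g1 _ _ Phi) (Ho b)) (eq_refl (g1 (H b)))).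
      reflexivity.
    + rewrite thom_h2.
      rewrite (proof_irrelevance _ (f_equal (@g2 _ _ Phi) (Ho a)) (eq_refl (g2 (H a)))), (proof_irrelevance _ (f_equal (@g2 _ _ Phi) (Ho b)) (eq_refl (g2 (H b)))).
      reflexivity.
  - intros beta E.
    assert (Ec : forall c, comp (fmap G (eta c)) (iso_bwd beta (F c)) = psi c).
    { intro c.
      pose proof (f_equal (fun X : Functor C12 (GraphCat Phi) =>
          existT (fun ab : C1 * C2 => Hom (Phi (fst ab)) (snd ab)) (g1 (X c), g2 (X c)) (gpsi (X c))) E) as E'.
      simpl in E'. apply ProofIrrelevanceTheory.EqdepTheory.inj_pairT2 in E'. exact E'. }
    assert (EF : forall c, iso_bwd beta (F c) = alpha_b (F c)).
    { intro c.
      transitivity (comp (fmap G (etai c)) (comp (fmap G (eta c)) (iso_bwd beta (F c)))).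
      { rewrite comp_assoc, <- fmap_comp, etai_eta, fmap_id, comp_id_l. reflexivity. }
      rewrite Ec, <- alpha_cond, comp_assoc, <- fmap_comp, etai_eta, fmap_id, comp_id_l. reflexivity. }
    assert (EB : forall d, alpha_b d = iso_bwd beta d).
    { intro d. change (alpha_b d) with (iso_bwd alpha d). rewrite (bwd_decomp alpha d), (bwd_decomp beta d), EF. reflexivity. }
    apply NatIso_eq; [|exact EB].
    intro a. simpl.
    rewrite <- (comp_id_r (alpha_f a)), <- (iso_bwd_fwd beta a), <- EB, comp_assoc, alpha_fb.
    apply comp_id_l.
Qed.
End P3.

Theorem lemma5p1p3 (C1 C2 C12 : Category) (F : Functor C12 C1)
  (G : Functor C12 C2) (q : QuasiInverse F) :
  (* the unit is a morphism of Corr_eq(C1,C2) *)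
  Fcomp (gproj1 (corr_to_funct G q)) (unit_functor G q) = F /\
  Fcomp (gproj2 (corr_to_funct G q)) (unit_functor G q) = G /\
  (* universal property of the unit: corr_to_funct is left adjoint to Graph *)
  (forall (Phi : Functor C1 C2) (H : Functor C12 (GraphCat Phi)),
      Fcomp (gproj1 Phi) H = F -> Fcomp (gproj2 Phi) H = G ->
      exists! alpha : NatIso (corr_to_funct G q) Phi,
        Fcomp (GraphMap alpha) (unit_functor G q) = H).
Proof.
  split; [|split].
  - unshelve eapply functor_ext; [intro; reflexivity | intros; reflexivity].
  - unshelve eapply functor_ext; [intro; reflexivity | intros; reflexivity].
  - intros Phi H HF HG. subst F G. apply part3.
Qed.
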